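(* Let $G$ be a Polish group and let $\varphi\colon G \to [0,\infty]$ be a Baire measurable function which is not meagre (in the sense below). Then $(\varphi \diamond \varphi^{\diamond-1})^\circ(1_G) = 0$.
   Context: For functions $\varphi,\psi\colon G\to[0,\infty]$: $\varphi^{\diamond-1}(x) = \varphi(x^{-1})$ and $(\varphi \diamond \psi)(x) = \inf_{h \in G}\bigl(\varphi(h) + \psi(h^{-1}x)\bigr)$. A function $\varphi\colon G \to [0,\infty]$ is called meagre if there exists $r > 0$ such that $\{x \colon \varphi(x) < r\}$ is a meagre subset of $G$. The interior $\varphi^\circ$ of $\varphi$ is the function $\varphi^\circ(x) = \limsup_{y \to x} \varphi(y)$ (the least upper semi-continuous function which is pointwise $\geq \varphi$). *)

(* Defs.v *)
From HB Require Import structures.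
From mathcomp Require Import all_boot all_order all_algebra.
From mathcomp Require Import all_classical all_reals all_analysis.
Set Implicit Arguments. Unset Strict Implicit. Unset Printing Implicit Defensive.
Import Order.TTheory GRing.Theory Num.Theory.
Local Open Scope classical_set_scope.
Local Open Scope ring_scope.

Definition topological_group (G : topologicalType)
    (mul : G -> G -> G) (inv : G -> G) (one : G) : Prop :=
  [/\ (forall x y z, mul x (mul y z) = mul (mul x y) z),
      (forall x, mul one x = x /\ mul x one = x),
      (forall x, mul (inv x) x = one /\ mul x (inv x) = one),
      continuous (fun p : G * G => mul p.1 p.2) &
      continuous inv].

Definition separable_space (T : topologicalType) : Prop :=
  exists D : set T, countable D /\ dense D.

(* The space is
   given as a complete pseudometric type whose topology is the one induced by
   that (complete) pseudometric; Hausdorffness makes it a metric. *)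
Definition polish_space (R : realType) (G : completePseudoMetricType R) : Prop :=
  hausdorff_space G /\ separable_space G.

Definition nowhere_dense (T : topologicalType) (A : set T) : Prop :=
  (closure A)° = set0.

Definition meagre_set (T : topologicalType) (A : set T) : Prop :=
  exists F : nat -> set T, (forall n, nowhere_dense (F n)) /\
    A `<=` \bigcup_n F n.

Definition baire_property (T : topologicalType) (A : set T) : Prop :=
  exists U : set T, open U /\ meagre_set ((A `\` U) `|` (U `\` A)).

Definition baire_measurable (T : topologicalType) (R : realType)
    (f : T -> \bar R) : Prop :=
  forall B : set (\bar R), open B -> baire_property (f @^-1` B).

Definition meagre_fun (T : topologicalType) (R : realType)
    (f : T -> \bar R) : Prop :=
  exists r : R, 0 < r /\ meagre_set [set x | (f x < r%:E)%E].

Definition diamond_inv (G : Type) (R : realType) (inv : G -> G) (f : G -> \bar R) :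
  G -> \bar R := fun x => f (inv x).

Definition diamond (G : Type) (R : realType) (mul : G -> G -> G) (inv : G -> G)
    (f g : G -> \bar R) : G -> \bar R :=
  fun x => ereal_inf [set (f h + g (mul (inv h) x))%E | h in [set: G]].

(* interior phi^o(x) = limsup_{y -> x} phi(y)
   = inf over neighbourhoods U of x of sup_{y in U} phi(y)
   (the least upper semicontinuous function >= phi) *)
Definition usc_hull (T : topologicalType) (R : realType) (f : T -> \bar R) :
  T -> \bar R :=
  fun x => ereal_inf [set ereal_sup (f @` U) | U in [set U | nbhs x U]].

(* Main.v *)
Require Import Defs.
From HB Require Import structures.
From mathcomp Require Import all_boot all_order all_algebra.
From mathcomp Require Import all_classical all_reals all_analysis.
Import Order.TTheory GRing.Theory Num.Theory.
Local Open Scope classical_set_scope.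
Local Open Scope ring_scope.

Section Bai.
Variables (R : realType) (G : completePseudoMetricType R).

Lemma closure_ball_sub (b : G) (s : R) : 0 < s ->
  closure (ball b s) `<=` ball b (s + s).
Proof.
move=> s0 y /(_ (ball y s) (nbhsx_ballx y s s0)) [z [bz yz]].
exact: (ball_triangle bz (ball_sym yz)).
Qed.

Lemma baire_ps (F : nat -> set G) (W : set G) :
  (forall n (V : set G), open V -> V `<=` closure (F n) -> V = set0) ->
  open W -> W !=set0 -> ~ (W `<=` \bigcup_n F n).
Proof.
move=> nd oW [w Ww] WF.
have [r0 r00 Br0] : exists2 r0 : R, 0 < r0 & ball w (r0 + r0) `<=` W.
  have /nbhs_ballP[e e0 He] : nbhs w W by exact: open_nbhs_nbhs.
  exists (e / 2); first by rewrite divr_gt0.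
  by move=> y; rewrite -splitr; exact: He.
pose P (n : nat) (ar : G * R) (bs : G * R) :=
  [/\ 0 < bs.2, ball bs.1 (bs.2 + bs.2) `<=` ball ar.1 ar.2 `&` ~` F n
    & bs.2 < n.+1%:R^-1].
have step : forall nar : nat * (G * R), exists bs, 0 < nar.2.2 -> P nar.1 nar.2 bs.
  move=> [n [a r]] /=.
  have [r0'|rle] := ltP 0 r; last by exists (a, r) => /=.
  have : ~ ((ball a r)° `<=` closure (F n)).
    move=> sub; have := nd n _ (@open_interior _ (ball a r)) sub.
    have : (ball a r)° a by exact: nbhsx_ballx.
    by move=> + e; rewrite e.
  move=> /existsNP[x /not_implyP[xin xF]].
  have oV : open ((ball a r)° `&` ~` closure (F n)).
    by apply: openI; [exact: open_interior|rewrite openC; exact: closed_closure].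
  have /nbhs_ballP[e e0 He] : nbhs x ((ball a r)° `&` ~` closure (F n)).
    exact: open_nbhs_nbhs.
  pose s := Num.min (e / 2) (n.+2%:R^-1).
  have s0 : 0 < s by rewrite lt_min divr_gt0 //= invr_gt0.
  exists (x, s) => _; split => //=.
  - move=> y yB.
    have /He [/interior_subset ya yF] : ball x e y.
      apply: (le_ball _ yB); rewrite [leRHS](splitr e) lerD // ge_min lexx //.
    by split => // Fy; apply: yF; exact: subset_closure.
  - rewrite /s gt_min ltf_pV2 ?posrE ?ltr_nat ?ltnS ?leqnn ?orbT //.
    idtac.
have [f Pf] := choice step.
pose fix ar n := if n is p.+1 then f (p, ar p) else (w, r0).
have arpos n : 0 < (ar n).2.
  by elim: n => [//|n IH] /=; have [] := Pf (n, ar n) IH.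
have Pn n : P n (ar n) (ar n.+1) by exact: (Pf (n, ar n) (arpos n)).
pose a n := (ar n).1.
have nest n m : (n <= m)%N -> ball (a m) (ar m).2 `<=` ball (a n) (ar n).2.
  elim: m => [|m IH]; first by rewrite leqn0 => /eqP ->.
  rewrite leq_eqVlt => /orP[/eqP -> //|/IH]; apply: subset_trans.
  have [p0 pb _] := Pn m => y yb.
  have : ball (a m.+1) ((ar m.+1).2 + (ar m.+1).2) y.
    by apply: (le_ball _ yb); rewrite lerDl ltW.
  by move/pb => [].
have aev n : \forall m \near \oo, ball (a n) (ar n).2 (a m).
  exists n => // m /= nm; apply: (nest n m nm); exact: ballxx.
have : cvg (a @ \oo).
  apply: cauchy_cvg; apply: cauchy_exP => e e0.
  have [k ke] : exists k, k.+1%:R^-1 < e.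
    exists (Num.truncn e^-1).
    by rewrite -ltf_pV2 ?(posrE,divr_gt0)// invrK truncnS_gt.
  exists (a k.+1); apply: filterS (aev k.+1) => y; apply: le_ball.
  have [_ _ +] := Pn k; move=> /ltW h; exact: (le_trans h (ltW ke)).
rewrite cvg_ex /= => -[l Hl].
have lin n : ball (a n) ((ar n).2 + (ar n).2) l.
  apply: closure_ball_sub; first exact: arpos.
  have := @closed_cvg _ _ \oo eventually_filter a _ (@closed_closure _ (ball (a n) (ar n).2)).
  move=> /(_ _ l Hl); apply.
  by apply: filterS (aev n) => y; exact: subset_closure.
have Wl : W l by apply: Br0; exact: (lin 0%N).
have [k _ Fk] := WF l Wl.
have [_ pb _] := Pn k.
by have [_] := pb l (lin k.+1).
Qed.
End Bai.

Lemma nd_open (T : topologicalType) (A : set T) : nowhere_dense A ->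
  forall V, open V -> V `<=` closure A -> V = set0.
Proof.
move=> nA V oV VA; apply/seteqP; split => // x Vx.
have : (closure A)° x.
  by apply: filterS VA _; exact: open_nbhs_nbhs.
by rewrite nA.
Qed.

Lemma meagre_sub (T : topologicalType) (A B : set T) :
  A `<=` B -> meagre_set B -> meagre_set A.
Proof. by move=> AB [F [nF BF]]; exists F; split => //; exact: subset_trans BF. Qed.

Lemma meagreU (T : topologicalType) (A B : set T) :
  meagre_set A -> meagre_set B -> meagre_set (A `|` B).
Proof.
move=> [F [nF AF]] [H [nH BH]].
exists (fun n => if odd n then H n./2 else F n./2); split.
  by move=> n; case: ifP.
move=> x [/AF [k _ Fk]|/BH [k _ Hk]].
  by exists k.*2 => //; rewrite odd_double doubleK.
by exists k.*2.+1 => //=; rewrite odd_double /= uphalf_double.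
Qed.

Lemma meagre_preimage (T : topologicalType) (g h : T -> T) (M : set T) :
  continuous g -> continuous h -> (forall z, g (h z) = z) ->
  (forall v, h (g v) = v) -> meagre_set M -> meagre_set (g @^-1` M).
Proof.
move=> cg ch gh hg [F [nF MF]].
exists (fun n => g @^-1` F n); split; last by move=> x /MF [k _ Fk]; exists k.
move=> n; rewrite /nowhere_dense.
set V := (closure _)°.
have oV : open V by exact: open_interior.
have hV : open (h @^-1` V) by apply: open_comp => // x _; exact: ch.
have : h @^-1` V = set0.
  apply: (@nd_open _ _ (nF n) _ hV) => z /interior_subset Vhz B Bz.
  have : nbhs (h z) (g @^-1` B) by apply: cg; rewrite gh.
  move=> /Vhz [y [Fy By]]; by exists (g y).
move=> e; apply/seteqP; split => // v Vv.
have : (h @^-1` V) (g v) by rewrite /= hg. by rewrite e.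
Qed.

Lemma cont_mulf (T : topologicalType) (mul : T -> T -> T) (f g : T -> T) x :
  continuous (fun p : T * T => mul p.1 p.2) ->
  {for x, continuous f} -> {for x, continuous g} ->
  {for x, continuous (fun y => mul (f y) (g y))}.
Proof.
move=> cm cf cg.
apply: (@continuous2_cvg _ _ _ _ (nbhs x) _ f g mul) => //.
exact: (cm (f x, g x)).
Qed.

Theorem lemma3p6 (R : realType) (G : completePseudoMetricType R)
  (mul : G -> G -> G) (inv : G -> G) (one : G)
  (phi : G -> \bar R) :
  polish_space G ->
  topological_group mul inv one ->
  (forall x, (0 <= phi x)%E) ->
  baire_measurable phi ->
  ~ meagre_fun phi ->
  usc_hull (diamond mul inv phi (diamond_inv inv phi)) one = 0%E.
Proof.
move=> _ [massoc mone minv cmul cinv] phi0 bm nm.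
set D := diamond mul inv phi (diamond_inv inv phi).
have D0 x : (0 <= D x)%E.
  apply: le_ereal_inf_tmp => _ [h _ <-]; exact: adde_ge0 (phi0 _) (phi0 _).
have inv1 : inv one = one.
  by have [+ _] := minv one; rewrite (proj2 (mone (inv one))).
have invu y z : mul y z = one -> z = inv y.
  move=> yz; rewrite -(proj1 (mone z)) -(proj1 (minv y)) -massoc yz.
  exact: (proj2 (mone _)).
have invM h x : inv (mul (inv h) x) = mul (inv x) h.
  apply/esym/invu; rewrite -massoc (massoc x) (proj2 (minv x)).
  by rewrite (proj1 (mone h)) (proj1 (minv h)).
have ctr c : continuous (fun y => mul c y).
  by move=> y; apply: cont_mulf; [exact: cmul|exact: cvg_cst|exact: cvg_id].
have htr c : continuous (fun y => mul (inv c) y) by [].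
have gh c z : mul (inv c) (mul c z) = z.
  by rewrite massoc (proj1 (minv c)) (proj1 (mone z)).
have hg c z : mul c (mul (inv c) z) = z.
  by rewrite massoc (proj2 (minv c)) (proj1 (mone z)).
apply/le_anti/andP; split; last first.
  apply: le_ereal_inf_tmp => _ [U Uone <-].
  apply: le_trans (D0 one) _; apply: ereal_sup_ubound.
  by exists one => //; exact: nbhs_singleton.
suff H : forall e : R, 0 < e -> (usc_hull D one <= e%:E)%E.
  case E : (usc_hull D one) => [r| |].
  - rewrite lee_fin; apply/ler_addgt0Pr => e e0; by rewrite add0r -lee_fin -E H.
  - by have := H 1 ltr01; rewrite E.
  - by [].
move=> e e0.
pose A := [set x | (phi x < (e / 2)%:E)%E].
have [U [oU MU]] : baire_property A.
  exact: (bm _ (@open_ereal_lt_ereal _ (e / 2)%:E)).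
set M := (A `\` U) `|` (U `\` A) in MU.
have [u Uu] : U !=set0.
  apply/set0P/negP => /eqP U0; apply: nm; exists (e / 2); split.
    by rewrite divr_gt0.
  by apply: meagre_sub MU => x Ax; left; split => //; rewrite U0.
pose N := [set x | U (mul (inv x) u)].
have Nn : nbhs one N.
  have c : {for one, continuous (fun x => mul (inv x) u)}.
    by apply: cont_mulf; [exact: cmul|exact: cinv|exact: cvg_cst].
  apply: c; rewrite inv1 (proj1 (mone u)).
  exact: open_nbhs_nbhs.
apply: le_trans (ereal_inf_lbound _) _; first by exists N.
apply: ge_ereal_sup => _ [x Nx <-].
pose W := U `&` [set y | U (mul (inv x) y)].
have oW : open W.
  by apply: openI => //; apply: open_comp => // y _; exact: htr.
have M'm : meagre_set (M `|` (fun y => mul (inv x) y) @^-1` M).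
  apply: meagreU => //; apply: (@meagre_preimage _ (fun y => mul (inv x) y) (fun y => mul x y)) => //.
have [F [nF MF]] := M'm.
have : ~ (W `<=` \bigcup_n F n).
  apply: baire_ps => //; last by exists u.
  move=> n V oV; exact: (@nd_open _ _ (nF n) _ oV).
move=> /existsNP[h /not_implyP[[Uh Uxh] hF]].
have hM : ~ M h by move=> /(fun p => MF h (or_introl p)).
have xhM : ~ M (mul (inv x) h) by move=> p; apply: hF; apply: MF; right.
have Ah : A h by apply: contrapT => nA; apply: hM; right; split.
have Axh : A (mul (inv x) h).
  by apply: contrapT => nA; apply: xhM; right; split.
apply: le_trans (ereal_inf_lbound _) _.
  by exists h => //.
rewrite /diamond_inv invM.
apply: ltW; rewrite [e in (_ < e%:E)%E](splitr e) EFinD.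
exact: lteD.
Qed.
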